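(* Let $\mathcal{CT}$ be a theory of constraints, with set of atomic constraints $\mathcal C$, that is closed under negation. For any constraints $c_1,\dots,c_m\in\mathcal C$ there exist conjunctions $e_1,\dots,e_r$ of constraints such that $\mathcal{CT}\models\forall(\neg(c_1\wedge\dots\wedge c_m)\leftrightarrow(e_1\vee\dots\vee e_r))$, each $e_i$ is consistent, and $e_i$ and $e_j$ are mutually exclusive for all $i\neq j$.
   Context: $\mathcal{CT}$ is a first-order theory with equality (identity on its domain, including the Clark Equality Theory) whose atomic formulas form the set $\mathcal C$ of (atomic) constraints; $\mathcal{CT}\models\varphi$ means $\varphi$ is valid in $\mathcal{CT}$; $\forall(\cdot)$ and $\exists(\cdot)$ denote universal and existential closure. A conjunction $e$ of constraints is consistent if $\mathcal{CT}\models\exists(e)$; conjunctions $e,e'$ are mutually exclusive if $\mathcal{CT}\models\neg\exists(e\wedge e')$. $\mathcal{CT}$ is closed under negation if for every $c\in\mathcal C$ there exist $d_1,\dots,d_m\in\mathcal C$ such that $\mathcal{CT}\models\forall(\neg c\leftrightarrow(d_1\vee\dots\vee d_m))$ and $\mathcal{CT}\models\neg\exists(d_i\wedge d_j)$ for all $i,j$ with $i\neq j$.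
   Formalization: $\mathcal{CT}$ is also assumed complete: every conjunction e of constraints satisfies either $\mathcal{CT}\models\exists(e)$ or $\mathcal{CT}\models\neg\exists(e)$. The paper assumes this as well. *)

(* Defs.v *)
From Stdlib Require Import List.
Import ListNotations.

(* A first-order constraint theory, given semantically:
   - [var]   : the variables,
   - [constr]  : the set C of atomic constraints (atomic formulas),
   - [model] : an index type for the models of CT, each with domain [dom m],
   - [sat m v c] : the atomic constraint c holds in model m under valuation v.
   CT |= phi  means phi holds in every model of CT. *)
Record CTheory := {
  var : Type;
  constr : Type;
  model : Type;
  dom : model -> Type;
  sat : forall m : model, (var -> dom m) -> constr -> Prop
}.

Arguments sat {c} m v _.

Definition holds_conj {T : CTheory} (m : model T) (v : var T -> dom T m)
  (e : list (constr T)) : Prop :=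
  forall c, In c e -> sat m v c.

Definition consistent {T : CTheory} (e : list (constr T)) : Prop :=
  forall m : model T, exists v : var T -> dom T m, holds_conj m v e.

Definition mutually_exclusive {T : CTheory} (e e' : list (constr T)) : Prop :=
  forall m : model T, ~ (exists v : var T -> dom T m,
                           holds_conj m v e /\ holds_conj m v e').

Definition closed_under_negation (T : CTheory) : Prop :=
  forall c : constr T, exists ds : list (constr T),
    (forall (m : model T) (v : var T -> dom T m),
        ~ sat m v c <-> exists d, In d ds /\ sat m v d) /\
    (forall (i j : nat) (d d' : constr T),
        nth_error ds i = Some d -> nth_error ds j = Some d' -> i <> j ->
        mutually_exclusive [d] [d']).

(* Standard CHR completeness assumption on CT: every conjunction of
   constraints is either consistent or inconsistent. *)
Definition complete (T : CTheory) : Prop :=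
  forall e : list (constr T),
    consistent e \/
    (forall m : model T, ~ exists v : var T -> dom T m, holds_conj m v e).

(* Main.v *)
Require Import Defs.
From Stdlib Require Import List.
From Stdlib Require Import Classical Lia Arith PeanoNat.
Import ListNotations.

Definition PW {A} (R : A -> A -> Prop) (L : list A) :=
  forall i j x y, nth_error L i = Some x -> nth_error L j = Some y -> i <> j -> R x y.

Lemma PW_app {A} (R : A -> A -> Prop) (L1 L2 : list A) :
  PW R L1 -> PW R L2 -> (forall a b, In a L1 -> In b L2 -> R a b /\ R b a) ->
  PW R (L1 ++ L2).
Proof.
  intros H1 H2 H3 i j x y Hi Hj Hij.
  destruct (Nat.lt_ge_cases i (length L1)) as [Li|Li];
  destruct (Nat.lt_ge_cases j (length L1)) as [Lj|Lj].
  - rewrite nth_error_app1 in Hi, Hj by lia. eauto.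
  - rewrite nth_error_app1 in Hi by lia. rewrite nth_error_app2 in Hj by lia.
    apply nth_error_In in Hi, Hj. apply (H3 _ _ Hi Hj).
  - rewrite nth_error_app2 in Hi by lia. rewrite nth_error_app1 in Hj by lia.
    apply nth_error_In in Hi, Hj. apply (H3 _ _ Hj Hi).
  - rewrite nth_error_app2 in Hi, Hj by lia. eapply H2; eauto. lia.
Qed.

Lemma PW_single {A} (R : A -> A -> Prop) x : PW R [x].
Proof.
  intros [|[|i]] [|[|j]] a b Ha Hb Hij; simpl in *; try discriminate; lia.
Qed.

Lemma PW_cons_inv {A} (R : A -> A -> Prop) x L :
  PW R (x :: L) -> PW R L /\ forall y, In y L -> R x y /\ R y x.
Proof.
  intros H. split.
  - intros i j a b Ha Hb Hij. apply (H (S i) (S j)); auto.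
  - intros y Hy. apply In_nth_error in Hy as [n Hn].
    split; [apply (H 0 (S n)) | apply (H (S n) 0)]; simpl; auto.
Qed.

Lemma PW_filter {A} (R : A -> A -> Prop) (P : A -> Prop) L :
  PW R L -> exists L', (forall x, In x L' <-> In x L /\ P x) /\ PW R L'.
Proof.
  induction L as [|x L IH]; intros H.
  - exists []. split; [simpl; tauto | intros [|] [|] ? ? Ha; discriminate].
  - apply PW_cons_inv in H as [HL Hx]. destruct (IH HL) as [L' [HL'1 HL'2]].
    destruct (classic (P x)) as [Px|Px].
    + exists (x :: L'). split.
      * intros y; simpl; rewrite HL'1. split; [intros [<-|?]; tauto|].
        intros [[<-|?] ?]; tauto.
      * apply (PW_app R [x] L'); [apply PW_single|assumption|].
        intros a b [<-|[]] Hb. apply HL'1 in Hb. apply Hx; tauto.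
    + exists L'. split; [|assumption].
      intros y; simpl; rewrite HL'1. split; [tauto|].
      intros [[<-|?] ?]; tauto.
Qed.

Lemma PW_map {A B} (R : A -> A -> Prop) (R' : B -> B -> Prop) (f : A -> B) L :
  (forall x y, R x y -> R' (f x) (f y)) -> PW R L -> PW R' (map f L).
Proof.
  intros Hf H i j a b Ha Hb Hij.
  rewrite nth_error_map in Ha, Hb.
  destruct (nth_error L i) eqn:E1; destruct (nth_error L j) eqn:E2;
    simpl in *; try discriminate.
  inversion Ha; inversion Hb; subst. eauto.
Qed.

Lemma holds_cons {T : CTheory} m v c e :
  @holds_conj T m v (c :: e) <-> sat m v c /\ holds_conj m v e.
Proof.
  unfold holds_conj; simpl; split.
  - intros H; split; auto.
  - intros [H1 H2] x [<-|Hx]; auto.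
Qed.

Lemma holds_single {T : CTheory} m v c :
  @holds_conj T m v [c] <-> sat m v c.
Proof. rewrite holds_cons. unfold holds_conj; simpl; tauto. Qed.

Lemma main_nocons (T : CTheory) (Hneg : closed_under_negation T)
  (cs : list (constr T)) :
  exists es : list (list (constr T)),
    (forall (m : model T) (v : var T -> dom T m),
        ~ holds_conj m v cs <-> exists e, In e es /\ holds_conj m v e) /\
    PW mutually_exclusive es.
Proof.
  induction cs as [|c cs IH].
  - exists []. split.
    + intros m v; split.
      * intros H; exfalso; apply H; intros x [].
      * intros [e [[] _]].
    + intros [|] [|] ? ? Ha; discriminate.
  - destruct IH as [es [Hes1 Hes2]]. destruct (Hneg c) as [ds [Hds1 Hds2]].
    exists (map (fun d => [d]) ds ++ map (cons c) es). split.
    + intros m v. rewrite holds_cons. split.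
      * intros H. destruct (classic (sat m v c)) as [Hc|Hc].
        -- assert (Hn : ~ holds_conj m v cs) by tauto.
           apply Hes1 in Hn as [e [He1 He2]].
           exists (c :: e). split.
           ++ apply in_or_app; right; apply in_map; auto.
           ++ apply holds_cons; auto.
        -- apply Hds1 in Hc as [d [Hd1 Hd2]]. exists [d]. split.
           ++ apply in_or_app; left; apply in_map with (f := fun d => [d]); auto.
           ++ apply holds_single; auto.
      * intros [e [He1 He2]]. apply in_app_or in He1 as [He1|He1];
          apply in_map_iff in He1 as [x [<- Hx]].
        -- apply holds_single in He2. intros [Hc _]. apply (Hds1 m v); eauto.
        -- apply holds_cons in He2 as [_ He2]. intros [_ Hc].
           apply (Hes1 m v); eauto.
    + apply PW_app.
      * apply PW_map with (R := fun d d' => mutually_exclusive [d] [d']); auto.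
      * apply PW_map with (R := mutually_exclusive); auto.
        intros x y Hxy m [v [H1 H2]]. apply holds_cons in H1, H2.
        apply (Hxy m). exists v; tauto.
      * intros a b Ha Hb. apply in_map_iff in Ha as [d [<- Hd]].
        apply in_map_iff in Hb as [e [<- He]].
        split; intros m [v [H1 H2]].
        -- apply holds_single in H1. apply holds_cons in H2 as [H2 _].
           exact (proj2 (Hds1 m v) (ex_intro _ d (conj Hd H1)) H2).
        -- apply holds_single in H2. apply holds_cons in H1 as [H1 _].
           exact (proj2 (Hds1 m v) (ex_intro _ d (conj Hd H2)) H1).
Qed.

Theorem lemmaB5 (T : CTheory) (Hneg : closed_under_negation T)
  (Hcomp : complete T) (cs : list (constr T)) :
  exists es : list (list (constr T)),
    (forall (m : model T) (v : var T -> dom T m),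
        ~ holds_conj m v cs <-> exists e, In e es /\ holds_conj m v e) /\
    (forall e, In e es -> consistent e) /\
    (forall (i j : nat) (e e' : list (constr T)),
        nth_error es i = Some e -> nth_error es j = Some e' -> i <> j ->
        mutually_exclusive e e').
Proof.
  destruct (main_nocons T Hneg cs) as [es [H1 H2]].
  destruct (PW_filter _ consistent es H2) as [es' [Hf1 Hf2]].
  exists es'. split; [|split].
  - intros m v. rewrite H1. split.
    + intros [e [He1 He2]]. exists e. split; auto. apply Hf1. split; auto.
      destruct (Hcomp e) as [Hc|Hc]; auto. exfalso; apply (Hc m); eauto.
    + intros [e [He1 He2]]. exists e. split; auto. apply Hf1; auto.
  - intros e He. apply Hf1; auto.
  - exact Hf2.
Qed.
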